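(* Let $(\mathcal X,\mathcal B,\pi)$ be a measure space with $\pi$ $\sigma$-finite, $r$ measurable, and $\{\varepsilon(x)\}$ an arbitrary real-valued random field. Assume: (a) $p_0$ (and a reference density $p_{\rm ref}$) in $\mathcal P_\pi$ satisfy $\int p|\log p|\,d\pi<\infty$; (b) $\mathbb E_{X\sim p}[e^{|r(X)+\varepsilon(X)|}]<\infty$ for all $p\in\mathcal P_\pi$; (c) $0<Q_*<\infty$, $Q\le Q_*$ everywhere; (d) $\int_Ap_0\,d\pi>0$ where $A=\{Q=Q_*\}$. Let $p_{t+1}(x)=p_t(x)Q(x)/\mathbb E_{X\sim p_t}Q(X)$. Then for all $t$, $$\mathbb E_{X\sim p_{t+1}}Q(X)\ge\mathbb E_{X\sim p_t}Q(X)+\frac{\operatorname{Var}_{X\sim p_t}(Q(X))}{\mathbb E_{X\sim p_t}Q(X)},$$ and $\lim_{t\to\infty}\mathbb E_{X\sim p_t}Q(X)=Q_*$.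
   Context: $\mathcal P_\pi$ = probability densities w.r.t. $\pi$. $Q(x):=e^{r(x)}\mathbb E[e^{\varepsilon(x)}]$ (conditional expectation over the noise independent of $X$), $Q_*:=\operatorname*{ess\,sup}_\pi Q$. *)

(* Defs.v *)
From HB Require Import structures.
From mathcomp Require Import all_boot all_order all_algebra.
From mathcomp Require Import all_classical all_reals all_analysis.
From mathcomp Require Import ess_sup_inf.
Set Implicit Arguments. Unset Strict Implicit. Unset Printing Implicit Defensive.
Import Order.TTheory GRing.Theory Num.Def Num.Theory.
Import numFieldNormedType.Exports.
Local Open Scope classical_set_scope.
Local Open Scope ring_scope.

Section defs.
Context {R : realType} {d : measure_display} {T : measurableType d}.
Variable pi : {measure set T -> \bar R}.

Definition is_density (p : T -> R) : Prop :=
  [/\ measurable_fun setT p, (forall x, 0 <= p x) & (\int[pi]_x (p x)%:E = 1)%E].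

(** E_{X ~ p} f(X) (real-valued; the integrals used below are all finite) *)
Definition Ep (p f : T -> R) : R := fine (\int[pi]_x (p x * f x)%:E).

Definition Varp (p f : T -> R) : R := Ep p (fun x => (f x - Ep p f) ^+ 2).

Fixpoint iter_dens (p0 Q : T -> R) (t : nat) : T -> R :=
  match t with
  | 0%N => p0
  | t'.+1 => fun x => iter_dens p0 Q t' x * Q x / Ep (iter_dens p0 Q t') Q
  end.
End defs.

Section Qdef.
Context {R : realType} {d : measure_display} {T : measurableType d}
  {dO : measure_display} {Omega : measurableType dO}.
Variable P : probability Omega R.

Definition Qext (r : T -> R) (eps : T -> Omega -> R) (x : T) : \bar R :=
  ((expR (r x))%:E * \int[P]_w (expR (eps x w))%:E)%E.

Definition Qfun (r : T -> R) (eps : T -> Omega -> R) (x : T) : R :=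
  fine (Qext r eps x).
End Qdef.

(* Main.v *)
Require Import Defs.
From HB Require Import structures.
From mathcomp Require Import all_boot all_order all_algebra.
From mathcomp Require Import all_classical all_reals all_analysis.
From mathcomp Require Import ess_sup_inf measurable_realfun.
From mathcomp Require Import ring lra.
Import Order.TTheory GRing.Theory Num.Def Num.Theory.
Import numFieldNormedType.Exports.
Local Open Scope classical_set_scope.
Local Open Scope ring_scope.

Section core.
Context {R : realType} {d : measure_display} {T : measurableType d}.
Variable pi : {measure set T -> \bar R}.

Lemma mM {f g : T -> R} : measurable_fun setT f -> measurable_fun setT g ->
  measurable_fun setT (fun x => f x * g x).
Proof. exact: measurable_realfun.measurable_funM. Qed.

Lemma mE {f : T -> R} : measurable_fun setT f ->
  measurable_fun setT (fun x => (f x)%:E).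
Proof. by move=> mf; apply/measurable_EFinP. Qed.

Lemma int_bound {p g : T -> R} {M : R} : 0 <= M -> is_density pi p ->
  measurable_fun setT g -> (forall x, 0 <= g x <= M) ->
  (\int[pi]_x (p x * g x)%:E = (Ep pi p g)%:E)%E /\ 0 <= Ep pi p g <= M.
Proof.
move=> M0 [mp p0 ip1] mg hg.
have le : (\int[pi]_x (p x * g x)%:E <= \int[pi]_x (M%:E * (p x)%:E))%E.
  apply: (ge0_le_integral pi measurableT).
  all: try (by move=> x _; rewrite ?lee_fin ?mulr_ge0 //; case/andP: (hg x)).
  - exact: (mE (mM mp mg)).
  - apply: emeasurable_funM; first exact: measurable_cst.
    exact: (mE mp).
  - move=> x _; rewrite -EFinM lee_fin mulrC ler_wpM2r //; by case/andP: (hg x).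
have p0E : forall x, [set: T] x -> (0 <= (p x)%:E)%E by move=> x _; rewrite lee_fin.
rewrite (ge0_integralZl pi measurableT (mE mp) p0E) ?lee_fin // in le.
rewrite ip1 mule1 in le.
have ge : (0 <= \int[pi]_x (p x * g x)%:E)%E.
  by apply: integral_ge0 => x _; rewrite lee_fin mulr_ge0 //; case/andP: (hg x).
have fin : (\int[pi]_x (p x * g x)%:E)%E \is a fin_num.
  by rewrite ge0_fin_numE // (le_lt_trans le) ?ltry.
split; first by rewrite /Ep fineK.
rewrite /Ep; apply/andP; split; first exact: fine_ge0.
by rewrite -lee_fin fineK.
Qed.

Variables (Q : T -> R) (Qs : R) (A : set T).
Hypotheses (mQ : measurable_fun setT Q) (Q0 : forall x, 0 <= Q x)
  (QQs : forall x, Q x <= Qs) (Qs0 : 0 < Qs) (mA : measurable A)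
  (QA : forall x, A x -> Q x = Qs).

Lemma intA_bound p : is_density pi p ->
  exists a, (\int[pi]_(x in A) (p x)%:E = a%:E)%E /\ 0 <= a <= 1.
Proof.
case=> mp p0 ip1.
have p0E : forall x, [set: T] x -> (0 <= (p x)%:E)%E by move=> x _; rewrite lee_fin.
have le := ge0_subset_integral pi mA measurableT (mE mp) p0E (subsetT A).
rewrite ip1 in le.
have ge : (0 <= \int[pi]_(x in A) (p x)%:E)%E by apply: integral_ge0 => x _; rewrite lee_fin.
have fin : (\int[pi]_(x in A) (p x)%:E)%E \is a fin_num.
  by rewrite ge0_fin_numE // (le_lt_trans le) ?ltry.
exists (fine (\int[pi]_(x in A) (p x)%:E)%E); split; first by rewrite fineK.
apply/andP; split; first exact: fine_ge0.
by rewrite -lee_fin fineK.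
Qed.

Lemma step p : is_density pi p -> (0 < \int[pi]_(x in A) (p x)%:E)%E ->
  [/\ 0 < Ep pi p Q <= Qs,
     is_density pi (fun x => p x * Q x / Ep pi p Q),
     (\int[pi]_(x in A) (p x * Q x / Ep pi p Q)%:E
        = (Qs / Ep pi p Q)%:E * \int[pi]_(x in A) (p x)%:E)%E
   & Ep pi p Q + Varp pi p Q / Ep pi p Q
       <= Ep pi (fun x => p x * Q x / Ep pi p Q) Q].
Proof.
move=> dp Ap.
have dp' := dp; case: dp' => mp p0 ip1.
set m := Ep pi p Q.
have hQ : forall x, 0 <= Q x <= Qs by move=> x; rewrite Q0 QQs.
have [Em /andP[m0 mQs]] := int_bound (ltW Qs0) dp mQ hQ.
rewrite -/m in Em m0 mQs.
have p0E : forall x, [set: T] x -> (0 <= (p x)%:E)%E by move=> x _; rewrite lee_fin.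
have mpQ := mE (mM mp mQ).
have pQ0 : forall x, [set: T] x -> (0 <= (p x * Q x)%:E)%E.
  by move=> x _; rewrite lee_fin mulr_ge0.
have mpA : measurable_fun A (fun x => (p x)%:E).
  exact: (measurable_funS measurableT (subsetT A) (mE mp)).
have IA : (\int[pi]_(x in A) (p x * Q x)%:E = Qs%:E * \int[pi]_(x in A) (p x)%:E)%E.
  transitivity (\int[pi]_(x in A) (Qs%:E * (p x)%:E))%E.
    by apply: eq_integral => x; rewrite in_setE => Ax; rewrite QA // mulrC EFinM.
  rewrite ge0_integralZl //; try by [move=> x _; rewrite lee_fin | rewrite lee_fin ltW].
have mpos : 0 < m.
  rewrite -lte_fin -Em.
  apply: (lt_le_trans _ (ge0_subset_integral pi mA measurableT mpQ pQ0 (subsetT A))).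
  by rewrite IA mule_gt0 // lte_fin.
have mneq : m != 0 by rewrite gt_eqF.
split.
- by rewrite mpos mQs.
- split.
  + exact: (@mM (fun x => p x * Q x) (fun _ => m^-1) (mM mp mQ) (measurable_cst _)).
  + by move=> x; rewrite divr_ge0 // ?mulr_ge0 // ltW.
  + transitivity (\int[pi]_x ((m^-1)%:E * (p x * Q x)%:E))%E.
      by apply: eq_integral => x _; rewrite EFinM muleC.
    rewrite (ge0_integralZl pi measurableT mpQ pQ0) ?lee_fin ?invr_ge0 ?ltW //.
    by rewrite Em -EFinM mulVf.
- transitivity (\int[pi]_(x in A) ((Qs / m)%:E * (p x)%:E))%E.
    apply: eq_integral => x; rewrite in_setE => Ax; rewrite QA // -EFinM.
    by congr (_%:E); ring.
  rewrite ge0_integralZl //; try by [move=> x _; rewrite lee_fin | rewrite lee_fin divr_ge0 // ltW].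
have hQ2 : forall x, 0 <= Q x ^+ 2 <= Qs ^+ 2.
  move=> x; rewrite sqr_ge0 /= !expr2; by apply: ler_pM.
have mQ2 := measurable_funX 2 mQ.
have [ES2 /andP[S20 _]] := int_bound (sqr_ge0 Qs) dp mQ2 hQ2.
set S2 := Ep pi p (fun x => Q x ^+ 2) in ES2 S20.
have hV : forall x, 0 <= (Q x - m) ^+ 2 <= Qs ^+ 2.
  move=> x; rewrite sqr_ge0 /=; have /andP[? ?] := hQ x; nra.
have mV := measurable_funX 2 (measurable_funB mQ (measurable_cst m)).
have [EV /andP[V0 _]] := int_bound (sqr_ge0 Qs) dp mV hV.
rewrite /Varp -/m.
set V := Ep pi p (fun x => (Q x - m) ^+ 2) in EV V0 *.
have mpV := mE (mM mp mV).
have pV0 : forall x, [set: T] x -> (0 <= (p x * (Q x - m) ^+ 2)%:E)%E.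
  by move=> x _; rewrite lee_fin mulr_ge0 // sqr_ge0.
have mpQ2 := mE (mM mp mQ2).
have pQ20 : forall x, [set: T] x -> (0 <= (p x * Q x ^+ 2)%:E)%E.
  by move=> x _; rewrite lee_fin mulr_ge0 // sqr_ge0.
have m2 : measurable_fun setT (fun x => ((2 * m)%:E * (p x * Q x)%:E)%E).
  by apply: emeasurable_funM; [exact: measurable_cst | exact: mpQ].
have m2' : measurable_fun setT (fun x => ((m ^+ 2)%:E * (p x)%:E)%E).
  by apply: emeasurable_funM; [exact: measurable_cst | exact: (mE mp)].
have n2 : forall x, [set: T] x -> (0 <= (2 * m)%:E * (p x * Q x)%:E)%E.
  by move=> x _; rewrite -EFinM lee_fin !mulr_ge0 // ltW.
have n2' : forall x, [set: T] x -> (0 <= (m ^+ 2)%:E * (p x)%:E)%E.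
  by move=> x _; rewrite -EFinM lee_fin mulr_ge0 // sqr_ge0.
have key : (V + 2 * m * m = S2 + m ^+ 2)%R.
  have : (\int[pi]_x ((p x * (Q x - m) ^+ 2)%:E + (2 * m)%:E * (p x * Q x)%:E)
        = \int[pi]_x ((p x * Q x ^+ 2)%:E + (m ^+ 2)%:E * (p x)%:E))%E.
    by apply: eq_integral => x _; rewrite -!EFinM -EFinD; congr (_%:E); ring.
  rewrite (ge0_integralD pi measurableT pV0 mpV n2 m2).
  rewrite (ge0_integralD pi measurableT pQ20 mpQ2 n2' m2').
  rewrite (ge0_integralZl pi measurableT mpQ pQ0) ?lee_fin ?mulr_ge0 ?ltW //.
  rewrite (ge0_integralZl pi measurableT (mE mp) p0E) ?lee_fin ?sqr_ge0 //.
  rewrite EV Em ES2 ip1 mule1 -!EFinM -!EFinD => -[->]; ring.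
have -> : Ep pi (fun x => p x * Q x / m) Q = m^-1 * S2.
  rewrite /Ep.
  transitivity (fine (\int[pi]_x ((m^-1)%:E * (p x * Q x ^+ 2)%:E))%E).
    by congr fine; apply: eq_integral => x _; rewrite -EFinM; congr (_%:E); ring.
  rewrite (ge0_integralZl pi measurableT mpQ2 pQ20) ?lee_fin ?invr_ge0 ?ltW //.
  by rewrite ES2.
have -> : V = S2 - m ^+ 2 by lra.
rewrite le_eqVlt; apply/orP; left; apply/eqP; field; exact: mneq.
Qed.

Variable p0 : T -> R.
Hypotheses (dp0 : is_density pi p0) (Ap0 : (0 < \int[pi]_(x in A) (p0 x)%:E)%E).

Let pt t := iter_dens pi p0 Q t.
Let mt t := Ep pi (pt t) Q.

Lemma inv t : is_density pi (pt t) /\ (0 < \int[pi]_(x in A) (pt t x)%:E)%E.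
Proof.
elim: t => [|t [dt At]]; first by split.
have [/andP[m0 _] dt' IA _] := step _ dt At.
split; first exact: dt'.
rewrite /pt /= IA mule_gt0 // lte_fin divr_gt0 //.
Qed.

Lemma mt_bounds t : 0 < mt t <= Qs.
Proof. by have [dt At] := inv t; have [] := step _ dt At. Qed.

Lemma mono t : mt t <= mt t.+1.
Proof.
have [dt At] := inv t; have [/andP[m0 _] _ _ H] := step _ dt At.
apply: le_trans H; rewrite lerDl; apply: divr_ge0; last exact: ltW.
by apply: fine_ge0; apply: integral_ge0 => x _; rewrite lee_fin mulr_ge0 ?sqr_ge0 //; case: dt.
Qed.

Let a t := fine (\int[pi]_(x in A) (pt t x)%:E)%E.

Lemma aE t : (\int[pi]_(x in A) (pt t x)%:E)%E = (a t)%:E /\ 0 < a t <= 1.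
Proof.
have [dt At] := inv t; have [b [Eb /andP[_ b1]]] := intA_bound _ dt.
rewrite /a Eb /=; split => //; rewrite b1 andbT -lte_fin -Eb //.
Qed.

Lemma arec t : a t.+1 = Qs / mt t * a t.
Proof.
have [dt At] := inv t; have [_ _ IA _] := step _ dt At.
rewrite /a /pt /= IA; have [-> _] := aE t; by [].
Qed.

Lemma exists_close e : 0 < e -> exists t, Qs - e < mt t.
Proof.
move=> e0.
have [//|H] := pselect (exists t, Qs - e < mt t).
have {}H t : mt t <= Qs - e.
  by rewrite leNgt; apply/negP => h; apply: H; exists t.
set L := Qs - e in H.
have /andP[m00 _] := mt_bounds 0.
have L0 : 0 < L by apply: lt_le_trans m00 (H 0%N).
set h := e / L.
have h0 : 0 < h by rewrite divr_gt0.
have [_ /andP[a00 _]] := aE 0.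
have grow t : a 0%N * (1 + t%:R * h) <= a t.
  elim: t => [|t IH]; first by rewrite mul0r addr0 mulr1.
  rewrite arec.
  have [_ /andP[at0 _]] := aE t.
  have /andP[mt0 _] := mt_bounds t.
  have q1 : 1 + h <= Qs / mt t.
    rewrite ler_pdivlMr //.
    apply: (le_trans (y := (1 + h) * L)); first by rewrite ler_wpM2l // ?addr_ge0 ?ltW.
    by rewrite /h mulrDl mul1r divfK ?gt_eqF // /L subrK.
  apply: (le_trans (y := (1 + h) * a t)); last by rewrite ler_wpM2r // ltW.
  apply: (le_trans (y := (1 + h) * (a 0%N * (1 + t%:R * h)))); last first.
    by rewrite ler_wpM2l // addr_ge0 // ltW.
  have hc : 0 <= a 0%N * t%:R * h * h by apply: mulr_ge0; [apply: mulr_ge0; [apply: mulr_ge0; [exact: ltW | exact: ler0n] | exact: ltW] | exact: ltW].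
  rewrite -natr1 /=; lra.
set x := (h * a 0%N)^-1.
have x0 : 0 <= x by rewrite invr_ge0 mulr_ge0 // ltW.
have := archi_boundP x0; set n := archi_bound x => hn.
have hn' : 1 < n%:R * (h * a 0%N).
  have ha : 0 < h * a 0%N by rewrite mulr_gt0.
  rewrite -ltr_pdivrMr // div1r //.
have [_ /andP[_ an1]] := aE n.
have := grow n.
lra.
Qed.

Lemma ineq t : mt t + Varp pi (pt t) Q / mt t <= mt t.+1.
Proof. by have [dt At] := inv t; have [_ _ _ H] := step _ dt At. Qed.

Lemma conv : mt @ \oo --> Qs.
Proof.
apply/cvgrPdist_le => e e0.
have [t0 ht0] := exists_close _ e0.
near=> t.
have tt0 : (t0 <= t)%N by near: t; exact: nbhs_infty_ge.
have hm : mt t0 <= mt t.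
  by apply: (homo_leq (r := fun x y => x <= y)) => // [y x z|]; [exact: le_trans | exact: mono].
have [_ hQs] := andP (mt_bounds t).
rewrite ger0_norm ?subr_ge0 //; lra.
Unshelve. all: by end_near.
Qed.

End core.
Theorem lemma4 (R : realType) (d : measure_display) (T : measurableType d)
  (pi : {measure set T -> \bar R})
  (dO : measure_display) (Omega : measurableType dO) (P : probability Omega R)
  (r : T -> R) (eps : T -> Omega -> R) (p0 pref : T -> R) :
  sigma_finite setT pi ->
  measurable_fun setT r ->
  measurable_fun setT (fun xw : T * Omega => eps xw.1 xw.2) ->
  (* (a) *)
  is_density pi p0 -> is_density pi pref ->
  (\int[pi]_x (p0 x * `|ln (p0 x)|)%:E < +oo)%E ->
  (\int[pi]_x (pref x * `|ln (pref x)|)%:E < +oo)%E ->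
  (* (b) *)
  (forall p : T -> R, is_density pi p ->
     (\int[pi]_x ((p x)%:E * \int[P]_w (expR `|r x + eps x w|)%:E) < +oo)%E) ->
  (* (c) *)
  (0 < ess_sup pi (Qext P r eps) < +oo)%E ->
  (forall x, (Qext P r eps x <= ess_sup pi (Qext P r eps))%E) ->
  (* (d) *)
  (0 < \int[pi]_(x in [set x | Qext P r eps x = ess_sup pi (Qext P r eps)])
          (p0 x)%:E)%E ->
  (forall t : nat,
     Ep pi (iter_dens pi p0 (Qfun P r eps) t) (Qfun P r eps)
     + Varp pi (iter_dens pi p0 (Qfun P r eps) t) (Qfun P r eps)
       / Ep pi (iter_dens pi p0 (Qfun P r eps) t) (Qfun P r eps)
     <= Ep pi (iter_dens pi p0 (Qfun P r eps) t.+1) (Qfun P r eps))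
  /\
  (fun t : nat => Ep pi (iter_dens pi p0 (Qfun P r eps) t) (Qfun P r eps))
     @ \oo --> fine (ess_sup pi (Qext P r eps)).
Proof.
move=> _ mr meps dp0 _ _ _ _ /andP[es0 esoo] Qle Ap0.
set es := ess_sup pi (Qext P r eps) in es0 esoo Qle Ap0 *.
set Qs := fine es.
have esfin : es \is a fin_num by rewrite ge0_fin_numE // ltW.
have Qs0 : 0 < Qs by rewrite fine_gt0 // es0 esoo.
have Qext0 x : (0 <= Qext P r eps x)%E.
  by rewrite /Qext mule_ge0 // ?lee_fin ?expR_ge0 // integral_ge0 // => w _; rewrite lee_fin expR_ge0.
have Qextfin x : Qext P r eps x \is a fin_num.
  by rewrite ge0_fin_numE // (le_lt_trans (Qle x)).
have Q0 x : 0 <= Qfun P r eps x by apply: fine_ge0.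
have QQs x : Qfun P r eps x <= Qs by apply: fine_le.
have mexpr : measurable_fun setT (fun x => (expR (r x))%:E).
  have h1 := measurableT_comp (@measurable_expR R) mr.
  have h2 := measurableT_comp (@EFin_measurable R setT) h1.
  exact: h2.
have mf : measurable_fun setT (fun xw : T * Omega => (expR (eps xw.1 xw.2))%:E).
  exact: (measurableT_comp (@EFin_measurable R setT) (measurableT_comp (@measurable_expR R) meps)).
have f0 : forall xw : T * Omega, (0 <= (expR (eps xw.1 xw.2))%:E)%E.
  by move=> xw; rewrite lee_fin expR_ge0.
have mF := measurable_fun_fubini_tonelli_F (m2 := P) _ mf f0.
have mQext : measurable_fun setT (Qext P r eps).
  exact: (emeasurable_funM mexpr mF).
have mQ : measurable_fun setT (Qfun P r eps).
  exact: (measurableT_comp (fine_measurable measurableT) mQext).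
have mA : measurable [set x | Qext P r eps x = es].
  by rewrite -[X in measurable X]setTI; exact: (mQext measurableT _ (emeasurable_set1 es)).
have QA x : [set x | Qext P r eps x = es] x -> Qfun P r eps x = Qs.
  by move=> /= h; rewrite /Qfun h.
split.
- exact: (ineq pi _ _ _ mQ Q0 QQs Qs0 mA QA _ dp0 Ap0).
- exact: (conv pi _ _ _ mQ Q0 QQs Qs0 mA QA _ dp0 Ap0).
Qed.
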